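(* Assume the Setup and Matrix Notation below. Fix $i,j\in I$ and let $Z=\begin{pmatrix}P&Q\\R&S\end{pmatrix}$ be an $r\times r$ matrix over $\mathcal O_X(U_i\cap U_j)$, with $P$ of size $(r-2)\times(r-2)$, $Q$ of size $(r-2)\times 2$, $R$ of size $2\times(r-2)$, $S$ of size $2\times 2$. Then $M_i=ZM_j$ if and only if: (i) $P=P_{ij}=\Delta_{t_i}T'_i\Delta'_{t_j}$; (ii) $R=T''_i\Delta'_{t_j}$; (iii) $Q\,(f_j,g_j)^T=(-1)^{t_j}\,\Delta_{t_i}T'_i\,\mathbf s_j$; (iv) $S\,(f_j,g_j)^T=(-1)^{t_j}s_{jt_i}\,(f_i,g_i)^T$ (this holds in particular for $S=(-1)^{t_j}s_{jt_i}A_{ij}$). Moreover, such a matrix $Z$ always exists, and can be taken with $S=(-1)^{t_j}s_{jt_i}A_{ij}$; for any $Z$ satisfying (i)–(iv) with $S=(-1)^{t_j}s_{jt_i}A_{ij}$, one has $\det S=(-1)^{t_i}s_{jt_i}h_{ij}$ and $\det Z=h_{ij}$.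
   Context: Setup. $k$ is an algebraically closed field, $X$ a smooth irreducible algebraic variety over $k$, $Y\subset X$ a local complete intersection subscheme of codimension two with ideal sheaf $\mathcal J$ and normal bundle $N$, $L$ a line bundle on $X$, $r\ge 2$ an integer, and $s_1,\dots,s_{r-1}$ global sections generating $\bigwedge^2N\otimes L^*|_Y$. A bar denotes the class modulo the ideal of $Y$. $\{U_i\}_{i\in I}$ is a cover of $X$ by affine open sets such that: (a) $L|_{U_i}$ is trivial, with transition functions $h_{ij}\in\mathcal O_X(U_i\cap U_j)^\times$, $h_{ij}h_{jk}=h_{ik}$; (b) $f_i,g_i\in\mathcal O_X(U_i)$ generate $\mathcal J(U_i)$ (with $f_i=1,g_i=0$ if $Y\cap U_i=\emptyset$), and for every affine open $V\subseteq U_i$ and $u,v\in\mathcal O_X(V)$ with $uf_i=vg_i$ there is $w\in\mathcal O_X(V)$ with $u=wg_i$, $v=wf_i$; (c) for all $i,j$, $A_{ij}$ is a $2\times2$ matrix over $\mathcal O_X(U_i\cap U_j)$ with $(f_i,g_i)^T=A_{ij}(f_j,g_j)^T$; (d) $s_{it}\in\mathcal O_X(U_i)$ ($t=1,\dots,r-1$) satisfy $\bar s_{it}=\frac{\det\bar A_{ij}}{\bar h_{ij}}\bar s_{jt}$ on $Y\cap U_i\cap U_j$ (they represent $s_t$ locally); (e) there are indices $t_i\in\{1,\dots,r-1\}$ with $s_{it_i}=(-1)^{t_i}$, and for all $i,j$ the function $s_{jt_i}$ is a unit on $U_i\cap U_j$ and $\det A_{ij}=(-1)^{t_i}h_{ij}/s_{jt_i}$.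 Matrix Notation. $\Delta_t$ is the identity matrix (size clear from context) with its $t$-th row removed and $\Delta'_t$ its transpose; thus $\Delta_tM$ is $M$ without its $t$-th row and $M\Delta'_t$ is $M$ without its $t$-th column. $\mathbf s_i=(s_{i1},\dots,s_{i,r-1})^T$. $T'_i$ is the $(r-1)\times(r-1)$ matrix equal to the identity except for its $t_i$-th column, whose $t_i$-th entry is $1$ and whose $t$-th entry is $-(-1)^{t_i}s_{it}$ for $t\ne t_i$. $T''_i$ is the $2\times(r-1)$ matrix whose $t_i$-th column is $(f_i,g_i)^T$ and whose other columns are zero. $M_i=\begin{pmatrix}\Delta_{t_i}T'_i\\ T''_i\end{pmatrix}$ (an $r\times(r-1)$ matrix). $P_{ij}=\Delta_{t_i}T'_i\Delta'_{t_j}$. *)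

(* Defs.v *)
(* Everything takes place in the ring R = O_X(U_i \cap U_j).
   Conventions: r = n.+2 (so r >= 2), r-1 = n.+1, r-2 = n.
   Indices t in {1,...,r-1} of the paper are ordinals t : 'I_n.+1 with
   paper index = val t + 1; hence (-1)^t (paper) is sgn t := (-1)^+(t.+1). *)
From HB Require Import structures.
From mathcomp Require Import all_boot all_order all_algebra.
Set Implicit Arguments. Unset Strict Implicit. Unset Printing Implicit Defensive.
Import GRing.Theory.
Local Open Scope ring_scope.

Section Defs.
Variable R : comNzRingType.

Definition sgn (m : nat) (t : 'I_m) : R := (-1) ^+ (t.+1).

Definition vec2 (f g : R) : 'cV[R]_2 :=
  \col_(a < 2) (if val a == 0%N then f else g).

Definition Delta (n : nat) (t : 'I_n.+1) : 'M[R]_(n, n.+1) :=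
  row' t (1%:M : 'M[R]_n.+1).
Definition Delta' (n : nat) (t : 'I_n.+1) : 'M[R]_(n.+1, n) := (Delta t)^T.

Definition Tp (n : nat) (t : 'I_n.+1) (s : 'cV[R]_n.+1) : 'M[R]_n.+1 :=
  \matrix_(a, b) (if b == t then (if a == t then 1 else - (sgn t * s a ord0))
                  else (a == b)%:R).

Definition Tpp (n : nat) (t : 'I_n.+1) (f g : R) : 'M[R]_(2, n.+1) :=
  \matrix_(a, b) (if b == t then vec2 f g a ord0 else 0).

Definition Mmat (n : nat) (t : 'I_n.+1) (s : 'cV[R]_n.+1) (f g : R)
  : 'M[R]_(n + 2, n.+1) :=
  col_mx (Delta t *m Tp t s) (Tpp t f g).

Definition Pmat (n : nat) (ti tj : 'I_n.+1) (si : 'cV[R]_n.+1) : 'M[R]_n :=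
  Delta ti *m Tp ti si *m Delta' tj.

Definition in_ideal2 (f g x : R) : Prop := exists a b : R, x = a * f + b * g.

Definition koszul2 (f g : R) : Prop :=
  forall u v : R, u * f = v * g -> exists w : R, u = w * g /\ v = w * f.

End Defs.
Arguments sgn {R m} t.
Arguments Delta {R n} t.
Arguments Delta' {R n} t.

(* Main.v *)
Require Import Defs.
From HB Require Import structures.
From mathcomp Require Import all_boot all_order all_algebra all_fingroup.
From mathcomp Require Import ring.
Import GRing.Theory.
Local Open Scope ring_scope.

Section Aux.
Variable R : comNzRingType.
Variable n : nat.

Lemma sgn_sq (t : 'I_n.+1) : (sgn t : R) * sgn t = 1.
Proof. by rewrite /sgn -exprD -signr_odd addnn odd_double expr0. Qed.

Lemma mulDelta' m (A : 'M[R]_(m, n.+1)) (t : 'I_n.+1) : A *m Delta' t = col' t A.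
Proof.
apply/matrixP => a b; rewrite !mxE (bigD1 (lift t b)) //= big1 ?addr0.
  by rewrite /Delta' /Delta !mxE eqxx mulr1.
by move=> k kb; rewrite /Delta' /Delta !mxE eq_sym (negbTE kb) mulr0.
Qed.

Lemma Deltamul m (A : 'M[R]_(n.+1, m)) (t : 'I_n.+1) : Delta t *m A = row' t A.
Proof.
apply/matrixP => a b; rewrite !mxE (bigD1 (lift t a)) //= big1 ?addr0.
  by rewrite /Delta !mxE eqxx mul1r.
by move=> k kb; rewrite /Delta !mxE eq_sym (negbTE kb) mul0r.
Qed.

Lemma decomp (t : 'I_n.+1) : Delta' t *m Delta t + delta_mx t t = 1%:M :> 'M[R]_n.+1.
Proof.
apply/matrixP => a b; rewrite !mxE.
case: (unliftP t a) => [a'|] ->.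
  rewrite (bigD1 a') //= big1 ?addr0.
    rewrite /Delta' /Delta !mxE eqxx mul1r.
    have /negbTE-> : lift t a' != t by rewrite eq_sym neq_lift.
    by rewrite addr0.
  by move=> k /negbTE ka; rewrite /Delta' /Delta !mxE (inj_eq lift_inj) ka mul0r.
rewrite big1 ?add0r.
  by rewrite eqxx /= eq_sym.
by move=> k _; rewrite /Delta' /Delta !mxE eq_sym (negbTE (neq_lift t k)) mul0r.
Qed.

Lemma Tp_Delta' (t : 'I_n.+1) (s : 'cV[R]_n.+1) : Tp t s *m Delta' t = Delta' t.
Proof.
rewrite mulDelta'; apply/matrixP => a b; rewrite /Delta' /Delta !mxE.
by rewrite eq_sym (negbTE (neq_lift t b)) eq_sym.
Qed.

Lemma Delta_Delta' (t : 'I_n.+1) : Delta t *m Delta' t = 1%:M :> 'M[R]_n.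
Proof.
rewrite mulDelta'; apply/matrixP => a b; rewrite /Delta' /Delta !mxE.
by rewrite (inj_eq lift_inj).
Qed.

Lemma Tpp_Delta' (t : 'I_n.+1) (f g : R) : Tpp t f g *m Delta' t = 0.
Proof.
rewrite mulDelta'; apply/matrixP => a b; rewrite !mxE.
by rewrite eq_sym (negbTE (neq_lift t b)).
Qed.

Lemma Mmat_Delta' (t : 'I_n.+1) (s : 'cV[R]_n.+1) (f g : R) :
  Mmat t s f g *m Delta' t = col_mx 1%:M 0.
Proof.
by rewrite /Mmat mul_col_mx -mulmxA Tp_Delta' Delta_Delta' Tpp_Delta'.
Qed.

Lemma Tpp_mul (t : 'I_n.+1) (f g : R) (s : 'cV[R]_n.+1) :
  Tpp t f g *m s = s t ord0 *: vec2 f g.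
Proof.
apply/matrixP => a b; rewrite !mxE (bigD1 t) //= big1 ?addr0.
  by rewrite !mxE eqxx (ord1 b) mulrC.
by move=> k /negbTE kt; rewrite !mxE kt mul0r.
Qed.

Lemma Tp_s (t : 'I_n.+1) (s : 'cV[R]_n.+1) :
  s t ord0 = sgn t -> Tp t s *m s = sgn t *: delta_mx t ord0.
Proof.
move=> hs; apply/matrixP => a b; rewrite (ord1 b) !mxE (bigD1 t) //=.
rewrite !mxE eqxx hs.
case: (eqVneq a t) => [->|hat].
  rewrite eqxx big1 ?addr0 ?mulr1 ?mul1r //.
  by move=> k /negbTE kt; rewrite !mxE kt eq_sym kt mul0r.
rewrite (bigD1 a) //= !mxE (negbTE hat) eqxx mul1r big1 ?addr0 ?mulr0.
  by rewrite mulNr -mulrA (mulrC (s a ord0)) mulrA sgn_sq mul1r addNr.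
move=> k /andP[kt ka]; rewrite !mxE (negbTE kt) eq_sym (negbTE ka) mul0r //.
Qed.

Lemma Mmat_s (t : 'I_n.+1) (s : 'cV[R]_n.+1) (f g : R) :
  s t ord0 = sgn t -> Mmat t s f g *m s = col_mx 0 (sgn t *: vec2 f g).
Proof.
move=> hs; rewrite /Mmat mul_col_mx -mulmxA Tp_s // Tpp_mul hs.
congr col_mx; rewrite -scalemxAr Deltamul; apply/matrixP => a b.
by rewrite !mxE eq_sym (negbTE (neq_lift t a)) mulr0.
Qed.

Lemma delta_s (t : 'I_n.+1) (s : 'cV[R]_n.+1) :
  delta_mx t t *m s = s t ord0 *: delta_mx t ord0.
Proof.
apply/matrixP => a b; rewrite (ord1 b) !mxE (bigD1 t) //= big1 ?addr0.
  by rewrite !mxE !eqxx !andbT mulrC.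
by move=> k /negbTE kt; rewrite !mxE kt andbF mul0r.
Qed.

Lemma Gkey m (X : 'M[R]_(m, n.+1)) (t : 'I_n.+1) (s : 'cV[R]_n.+1) :
  s t ord0 = sgn t ->
  X = X *m Delta' t *m Delta t
      + (sgn t *: (X *m s - X *m Delta' t *m (Delta t *m s))) *m delta_mx 0 t.
Proof.
move=> hs.
have E : delta_mx t t = (sgn t *: (s - Delta' t *m (Delta t *m s))) *m delta_mx 0 t.
  have -> : s - Delta' t *m (Delta t *m s) = delta_mx t t *m s.
    have h := congr1 (mulmx^~ s) (decomp t); rewrite /= mul1mx mulmxDl in h.
    by rewrite mulmxA -{1}h addrC addKr.
  by rewrite delta_s hs scalerA sgn_sq scale1r mul_delta_mx.
rewrite -[X in LHS]mulmx1 -(decomp t) mulmxDr E.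
rewrite !mulmxA; congr (_ + _); congr (_ *m _).
by rewrite -scalemxAr mulmxBr !mulmxA.
Qed.

Lemma Gcancel m (X Y : 'M[R]_(m, n.+1)) (t : 'I_n.+1) (s : 'cV[R]_n.+1) :
  s t ord0 = sgn t -> X *m Delta' t = Y *m Delta' t -> X *m s = Y *m s -> X = Y.
Proof.
move=> hs h1 h2; by rewrite (@Gkey _ X _ _ hs) [RHS](@Gkey _ Y _ _ hs) h1 h2.
Qed.

End Aux.

Section KL.
Variable R : comNzRingType.
Variable n : nat.

Definition Ymx (A : 'M[R]_(n+2, n.+1)) (v : 'cV[R]_(n+2)) (t : 'I_n.+1)
  : 'M[R]_(n+2, n + (1+1)) := row_mx (col' t A) (row_mx (col t A) v).

Lemma det_xcol N (X : 'M[R]_N) i j : i != j -> \det (xcol i j X) = - \det X.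
Proof.
by move=> ij; rewrite xcolE det_mulmx /tperm_mx det_perm odd_tperm ij expr1 mulrN1.
Qed.

Lemma Yswap A v (t : 'I_n.+1) (ht : (t < n)%N) :
  let t' : 'I_n.+1 := Ordinal (ht : (t.+1 < n.+1)%N) in
  let tn : 'I_n := Ordinal ht in
  Ymx A v t = xcol (lshift (1+1) tn) (rshift n (lshift 1 ord0)) (Ymx A v t').
Proof.
move=> t' tn; apply/matrixP => a b; rewrite /xcol [RHS]mxE.
rewrite -(splitK b); case: (split b) => k /=.
  rewrite /Ymx row_mxEl.
  case: (eqVneq k tn) => [->|hk].
    rewrite tpermL row_mxEr row_mxEl !mxE; congr (A a _).
    by apply/val_inj; rewrite /= /bump leqnn.
  rewrite tpermD.
      rewrite row_mxEl !mxE; congr (A a _).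
      apply/val_inj; rewrite /= /bump.
      have hk' : (k : nat) != t by [].
      by rewrite ltn_neqAle eq_sym hk'.
    by rewrite (inj_eq (@lshift_inj _ _)) eq_sym.
  apply/eqP => /(congr1 val) /= hv.
  by move: (ltn_ord k); rewrite -hv ltnNge leq_addr.
rewrite -(splitK k); case: (split k) => k' /=; rewrite (ord1 k').
  rewrite tpermR /Ymx row_mxEr row_mxEl row_mxEl !mxE; congr (A a _).
  by apply/val_inj; rewrite /= /bump ltnn add0n.
rewrite tpermD.
    by rewrite /Ymx !row_mxEr.
  apply/eqP => /(congr1 val) /= hv.
  by move: (ht); rewrite hv ltnNge leq_addr.
by apply/eqP => /(congr1 val) /= /eqP; rewrite eqn_add2l.
Qed.


Lemma Yind (A : 'M[R]_(n+2, n.+1)) (v : 'cV[R]_(n+2)) (k : nat) : forall t : 'I_n.+1, (t + k)%N = n ->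
  \det (Ymx A v t) = (-1) ^+ k * \det (Ymx A v ord_max).
Proof.
elim: k => [|k IH] t htk.
  rewrite addn0 in htk; rewrite expr0 mul1r; congr (\det (Ymx A v _)).
  by apply/val_inj.
have ht : (t < n)%N by rewrite -[X in (_ < X)%N]htk addnS ltnS leq_addr.
rewrite (@Yswap A v t ht) det_xcol; last first.
  apply/eqP => /(congr1 val) /= hv.
  by move: (ht); rewrite hv ltnNge leq_addr.
rewrite IH ?exprS ?mulN1r ?mulNr //=; by rewrite addSnnS.
Qed.

Lemma KL1 (A : 'M[R]_(n+2, n.+1)) (v : 'cV[R]_(n+2)) (t : 'I_n.+1) (s : 'cV[R]_n.+1) : s t ord0 = sgn t ->
  \det (row_mx (A *m Delta' t) (row_mx (A *m s) v)) = sgn t * \det (Ymx A v t).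
Proof.
move=> hs.
have hAs : A *m s = sgn t *: col t A + col' t A *m (Delta t *m s).
  rewrite -mulDelta' -mulmxA [X in _ + X]mulmxA.
  have h := congr1 (mulmx^~ s) (@decomp R n t); rewrite /= mul1mx mulmxDl in h.
  rewrite -{1}h mulmxDr addrC; congr (_ + _).
    by rewrite delta_s hs -scalemxAr colE.
  by rewrite !mulmxA.
set w := Delta t *m s.
pose U : 'M[R]_(n + (1+1)) := block_mx 1%:M (row_mx w 0) 0 (block_mx (sgn t)%:M 0 0 1%:M).
have E : row_mx (A *m Delta' t) (row_mx (A *m s) v) = Ymx A v t *m U.
  rewrite /Ymx /U mul_row_block mul_mx_row !mul_row_block !mulmx1 !mulmx0 !addr0 !add0r.
  by rewrite mul_mx_scalar mulDelta' hAs add_row_mx add0r addrC.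
rewrite E det_mulmx /U (@det_ublock _ n (1+1)) det1 mul1r (@det_ublock _ 1 1) det1 mulr1 det_scalar1.
by rewrite mulrC.
Qed.

Lemma KL (A : 'M[R]_(n+2, n.+1)) (v : 'cV[R]_(n+2)) (t : 'I_n.+1) (s : 'cV[R]_n.+1) : s t ord0 = sgn t ->
  \det (row_mx (A *m Delta' t) (row_mx (A *m s) v)) = (-1) ^+ n.+1 * \det (Ymx A v ord_max).
Proof.
move=> hs; rewrite KL1 // (@Yind A v (n - t) t); last by rewrite subnKC // -ltnS.
rewrite mulrA /sgn -exprD; congr (_ ^+ _ * _).
by rewrite addSn subnKC // -ltnS.
Qed.

End KL.


Section Two.
Variable R : comNzRingType.

Lemma row_mx2 (x y : 'cV[R]_2) :
  row_mx x y = \matrix_(a < 2, b < 2) (if val b == 0%N then x a ord0 else y a ord0).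
Proof.
apply/matrixP => a b; rewrite [RHS]mxE.
rewrite -(splitK b); case: (split b) => k; rewrite (ord1 k) /=.
  by rewrite row_mxEl.
by rewrite row_mxEr.
Qed.

Lemma det2 (M : 'M[R]_2) : \det M = M 0 0 * M 1 1 - M 0 1 * M 1 0.
Proof.
rewrite (expand_det_row _ 0) !big_ord_recl big_ord0 addr0 /cofactor !det_mx11 !mxE /=.
rewrite expr0 mul1r /bump /= expr1 mulN1r mulrN.
by congr (M _ _ * M _ _ - M _ _ * M _ _); apply/val_inj.
Qed.

Lemma det_row2 (x y : 'cV[R]_2) (a b : R) :
  \det (row_mx (a *: x) (b *: y)) = a * b * \det (row_mx x y).
Proof.
have -> : row_mx (a *: x) (b *: y) = row_mx x y *m block_mx a%:M 0 0 b%:M.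
  by rewrite mul_row_block !mulmx0 addr0 add0r !mul_mx_scalar.
by rewrite det_mulmx (@det_ublock _ 1 1) !det_scalar1 mulrC.
Qed.

Lemma blk_det n (x b : 'cV[R]_2) (a : 'cV[R]_n) :
  \det (row_mx (col_mx 1%:M 0) (row_mx (col_mx 0 x) (col_mx a b)) : 'M[R]_(n + 2))
  = \det (row_mx x b).
Proof.
have -> : row_mx (col_mx 1%:M 0) (row_mx (col_mx 0 x) (col_mx a b))
        = block_mx 1%:M (row_mx 0 a) 0 (row_mx x b) :> 'M[R]_(n + 2).
  rewrite block_mxEh; congr row_mx; symmetry; exact: (@block_mxEh _ n 2 1 1 0 a x b).
by rewrite (@det_ublock _ n 2) det1 mul1r.
Qed.

End Two.

Theorem lemma4 (R : idomainType) (n : nat)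
  (fi gi fj gj hij hji : R) (Aij Aji : 'M[R]_2)
  (si sj : 'cV[R]_n.+1) (ti tj : 'I_n.+1)
  (* (a): transition functions of L, restricted to U_i \cap U_j *)
  (hij_unit : hij \is a GRing.unit) (hji_unit : hji \is a GRing.unit)
  (hijji : hij * hji = 1)
  (* (b): syzygies of the generators of J, on the affine U_i \cap U_j *)
  (kos_i : koszul2 fi gi) (kos_j : koszul2 fj gj)
  (* (c) *)
  (hAij : vec2 fi gi = Aij *m vec2 fj gj)
  (hAji : vec2 fj gj = Aji *m vec2 fi gi)
  (* (d): s_{it} = det A_ij / h_ij * s_{jt} modulo J(U_i \cap U_j) = (f_j, g_j),
          and symmetrically *)
  (hd_ij : forall t : 'I_n.+1,
      in_ideal2 fj gj (si t ord0 - \det Aij / hij * sj t ord0))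
  (hd_ji : forall t : 'I_n.+1,
      in_ideal2 fi gi (sj t ord0 - \det Aji / hji * si t ord0))
  (* (e) *)
  (hsi : si ti ord0 = sgn ti) (hsj : sj tj ord0 = sgn tj)
  (hsjti_unit : sj ti ord0 \is a GRing.unit)
  (hsitj_unit : si tj ord0 \is a GRing.unit)
  (hdet_ij : \det Aij = sgn ti * hij / sj ti ord0)
  (hdet_ji : \det Aji = sgn tj * hji / si tj ord0) :
  let Mi := Mmat ti si fi gi in
  let Mj := Mmat tj sj fj gj in
  let c := sgn tj * sj ti ord0 in
  [/\ (* characterization of M_i = Z M_j *)
      (forall (P : 'M[R]_n) (Q : 'M[R]_(n, 2)) (Rm : 'M[R]_(2, n)) (S : 'M[R]_2),
         Mi = block_mx P Q Rm S *m Mj <->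
         [/\ P = Pmat ti tj si,
             Rm = Tpp ti fi gi *m Delta' tj,
             Q *m vec2 fj gj = sgn tj *: (Delta ti *m Tp ti si *m sj)
           & S *m vec2 fj gj = c *: vec2 fi gi]),
      (* (iv) holds for S = (-1)^{t_j} s_{j t_i} A_ij *)
      (c *: Aij) *m vec2 fj gj = c *: vec2 fi gi,
      (* existence, with S = (-1)^{t_j} s_{j t_i} A_ij *)
      (exists (P : 'M[R]_n) (Q : 'M[R]_(n, 2)) (Rm : 'M[R]_(2, n)),
         Mi = block_mx P Q Rm (c *: Aij) *m Mj)
    & (* determinants *)
      (forall (P : 'M[R]_n) (Q : 'M[R]_(n, 2)) (Rm : 'M[R]_(2, n)),
         P = Pmat ti tj si ->
         Rm = Tpp ti fi gi *m Delta' tj ->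
         Q *m vec2 fj gj = sgn tj *: (Delta ti *m Tp ti si *m sj) ->
         \det (c *: Aij) = sgn ti * sj ti ord0 * hij /\
         \det (block_mx P Q Rm (c *: Aij)) = hij)].
Proof.
Proof.
move=> Mi Mj c.
have sj2 := sgn_sq R n tj.
have si2 := sgn_sq R n ti.
have Mj_D : Mj *m Delta' tj = col_mx 1%:M 0 by apply: Mmat_Delta'.
have Mj_s : Mj *m sj = col_mx 0 (sgn tj *: vec2 fj gj) by apply: Mmat_s.
have Mi_D : Mi *m Delta' tj = col_mx (Pmat ti tj si) (Tpp ti fi gi *m Delta' tj).
  by rewrite /Mi /Mmat mul_col_mx.
have Mi_s : Mi *m sj = col_mx (Delta ti *m Tp ti si *m sj) (sj ti ord0 *: vec2 fi gi).
  by rewrite /Mi /Mmat mul_col_mx Tpp_mul.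
have part2 : (c *: Aij) *m vec2 fj gj = c *: vec2 fi gi by rewrite -scalemxAl -hAij.
have part1 : forall (P : 'M[R]_n) (Q : 'M[R]_(n, 2)) (Rm : 'M[R]_(2, n)) (S : 'M[R]_2),
         Mi = block_mx P Q Rm S *m Mj <->
         [/\ P = Pmat ti tj si,
             Rm = Tpp ti fi gi *m Delta' tj,
             Q *m vec2 fj gj = sgn tj *: (Delta ti *m Tp ti si *m sj)
           & S *m vec2 fj gj = c *: vec2 fi gi].
  move=> P Q Rm S; split.
    move=> E.
    have E1 := congr1 (mulmx^~ (Delta' tj)) E.
    have E2 := congr1 (mulmx^~ sj) E.
    rewrite /= -mulmxA Mj_D mul_block_col !mulmx1 !mulmx0 !addr0 Mi_D in E1.
    rewrite /= -mulmxA Mj_s mul_block_col !mulmx0 !add0r Mi_s in E2.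
    case/eq_col_mx: E1 => E1a E1b; case/eq_col_mx: E2 => E2a E2b.
    split => //.
      by rewrite E2a -scalemxAr scalerA sj2 scale1r.
    by rewrite /c -scalerA E2b -scalemxAr scalerA sj2 scale1r.
  case=> EP ER EQ ES; apply: (@Gcancel R n _ _ _ tj sj hsj).
    by rewrite Mi_D -mulmxA Mj_D mul_block_col !mulmx1 !mulmx0 !addr0 EP ER.
  rewrite Mi_s -[RHS]mulmxA Mj_s mul_block_col !mulmx0 !add0r -!scalemxAr EQ ES.
  by rewrite !scalerA sj2 scale1r /c mulrA sj2 mul1r.
have key : sgn ti * sj ti ord0 * (\det Aij / hij) = 1.
  rewrite hdet_ij.
  transitivity ((sgn ti * sgn ti) * (sj ti ord0 * (sj ti ord0)^-1) * (hij * hij^-1)).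
    by ring.
  by rewrite si2 !mulrV // !mul1r.
split => //.
- have hid : forall a : 'I_n, exists ab : R * R,
      (sgn tj *: (Delta ti *m Tp ti si *m sj)) a ord0 = ab.1 * fj + ab.2 * gj.
    move=> a.
    have [al [be Hd]] := hd_ij (lift ti a).
    exists (sgn tj * (- (sgn ti * sj ti ord0) * al), sgn tj * (- (sgn ti * sj ti ord0) * be)).
    rewrite /= mxE -mulmxA Deltamul mxE mxE (bigD1 ti) //= (bigD1 (lift ti a)) /=;
      last by rewrite eq_sym neq_lift.
    rewrite big1 ?addr0; last first.
      move=> k /andP[kt ka]; rewrite mxE (negbTE kt) eq_sym (negbTE ka) mul0r //.
    have /negbTE hl : lift ti a != ti by rewrite eq_sym neq_lift.
    rewrite !mxE hl eqxx [(lift ti a == _)]eqxx mul1r.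
    set u := sj ti ord0; set x := si (lift ti a) ord0; set y := sj (lift ti a) ord0.
    set D := \det Aij / hij.
    have -> : sgn tj * (- (sgn ti * x) * u + y)
      = - (sgn tj * sgn ti * u) * (x - D * y) + sgn tj * y * (1 - sgn ti * u * D) by ring.
    by rewrite key subrr mulr0 addr0 Hd; ring.
  have /fin_all_exists [ab Hab] := hid.
  exists (Pmat ti tj si), (\matrix_(a, b) (if val b == 0%N then (ab a).1 else (ab a).2)),
    (Tpp ti fi gi *m Delta' tj).
  apply/part1; split => //.
  apply/matrixP => a b; rewrite (ord1 b) Hab !mxE big_ord_recl big_ord_recl big_ord0 !mxE /=.
  by rewrite addr0.
- move=> P Q Rm EP ER EQ.
  have EZ : Mi = block_mx P Q Rm (c *: Aij) *m Mj by apply/part1.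
  have hu : sj ti ord0 * (sj ti ord0)^-1 = 1 by rewrite mulrV.
  have hh : hij * hij^-1 = 1 by rewrite mulrV.
  split.
    rewrite detZ hdet_ij /c.
    transitivity ((sgn tj * sgn tj) * (sj ti ord0 * (sj ti ord0)^-1)
                   * (sgn ti * sj ti ord0 * hij)).
      by ring.
    by rewrite sj2 hu !mul1r.
  set Z := block_mx P Q Rm (c *: Aij).
  have [y hy] : exists y : 'cV[R]_2, \det (row_mx (vec2 fj gj) y) != 0.
    case: (eqVneq fj 0) => [f0|f0].
      exists (vec2 1 0); rewrite row_mx2 det2 !mxE /=.
      rewrite f0 mul0r mul1r sub0r oppr_eq0; apply/eqP => g0.
      have [w [h1 _]] : exists w, 1 = w * gj /\ 0 = w * fj.
        by apply: kos_j; rewrite f0 mulr0 mul0r.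
      by move: h1; rewrite g0 mulr0; apply/eqP; rewrite oner_eq0.
    by exists (vec2 0 1); rewrite row_mx2 det2 !mxE /= mulr1 mul0r subr0.
  set beta := \det (row_mx (vec2 fj gj) y).
  have H1 : \det Z * \det (row_mx (Mj *m Delta' tj) (row_mx (Mj *m sj) (col_mx 0 y)))
      = \det (row_mx (Mi *m Delta' tj) (row_mx (Mi *m sj) (Z *m col_mx 0 y))).
    by rewrite -det_mulmx !mul_mx_row !mulmxA (@mul_mx_row _ _ _ 1 1) mulmxA -EZ.
  rewrite (@KL R n Mi _ tj sj hsj) -(@KL R n Mi _ ti si hsi) in H1.
  rewrite Mj_D Mj_s (@Mmat_Delta' R n ti si fi gi) (@Mmat_s R n ti si fi gi hsi) in H1.
  rewrite /Z mul_block_col !mulmx0 !add0r in H1.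
  rewrite !blk_det hAij -scalemxAl !scalemxAr -[y]scale1r -(@mul_mx_row _ _ _ 1 1) in H1.
  rewrite det_mulmx !det_row2 -/beta in H1.
  rewrite scale1r -/beta in H1.
  have hs : sgn tj * beta != 0.
    rewrite mulf_neq0 //; apply/eqP => h; move: sj2; rewrite h mul0r => /esym/eqP.
    by rewrite oner_eq0.
  apply: (mulIf hs).
  transitivity (\det Z * (sgn tj * 1 * beta)); first by rewrite mulr1.
  rewrite /Z H1 hdet_ij /c.
  transitivity ((sgn ti * sgn ti) * (sj ti ord0 * (sj ti ord0)^-1) * (hij * (sgn tj * beta))).
    by ring.
  by rewrite si2 hu !mul1r.
Qed.
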